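(* Let $K$ be algebraically closed, $G$ a (not necessarily connected) reductive group over $K$ with identity component $G^\circ$, and $V$ a rational representation of $G$. Then $\sigma(G,V)\ge\sigma(G^\circ,V)$.
   Context: For a reductive group $R$ acting on $V$, the null cone is the common zero set of all non-constant homogeneous elements of $K[V]^R$, and $\sigma(R,V)$ is the smallest $D$ such that the homogeneous invariants of degrees $1,\dots,D$ have common zero set equal to the null cone. *)

(* Defs.v *)
From HB Require Import structures.
From mathcomp Require Import all_boot all_order all_algebra.
From mathcomp Require Import mpoly.
Set Implicit Arguments. Unset Strict Implicit. Unset Printing Implicit Defensive.
Import Order.TTheory GRing.Theory Num.Theory.
Local Open Scope ring_scope.

Section LinAlgGroups.
Variable K : closedFieldType.

Definition mxset (n : nat) := 'M[K]_n -> Prop.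

Definition mxeval (n : nat) (f : {mpoly K[n * n]}) (g : 'M[K]_n) : K :=
  f.@[fun i => mxvec g 0 i].

Definition GLn (n : nat) : mxset n := fun g => g \in unitmx.

(* Since GL_n is the principal open set
   D(det) of M_n, its closed subsets are exactly the intersections of GL_n
   with zero sets of polynomials in the matrix entries. *)
Definition Zclosed (n : nat) (A : mxset n) : Prop :=
  exists S : {mpoly K[n * n]} -> Prop,
    forall g, A g <-> (GLn g /\ forall f, S f -> mxeval f g = 0).

Definition Zirreducible (n : nat) (A : mxset n) : Prop :=
  (exists g, A g) /\ (forall g, A g -> GLn g) /\
  forall Z1 Z2 : mxset n, Zclosed Z1 -> Zclosed Z2 ->
    (forall g, A g -> Z1 g \/ Z2 g) ->
    (forall g, A g -> Z1 g) \/ (forall g, A g -> Z2 g).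

Definition is_subgroup (n : nat) (G : mxset n) : Prop :=
  (forall g, G g -> GLn g) /\ G 1%:M /\
  (forall g h, G g -> G h -> G (g *m h)) /\ (forall g, G g -> G (invmx g)).

Definition is_alg_group (n : nat) (G : mxset n) : Prop :=
  is_subgroup G /\ Zclosed G.

(* Identity component G° : the union of all irreducible subsets of G
   containing the identity (= the irreducible component of G through 1). *)
Definition identity_component (n : nat) (G : mxset n) : mxset n :=
  fun g => exists Z : mxset n,
    (forall x, Z x -> G x) /\ Zirreducible Z /\ Z 1%:M /\ Z g.

Definition unipotent (n : nat) (g : 'M[K]_n) : Prop :=
  exists k : nat, (g - 1%:M) ^+ k = 0.

(* Reductive (not necessarily connected): the unipotent radical is trivial,
   i.e. every closed connected (= irreducible) normal subgroup of G all of
   whose elements are unipotent is trivial. *)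
Definition is_reductive (n : nat) (G : mxset n) : Prop :=
  is_alg_group G /\
  forall N : mxset n,
    is_subgroup N -> Zclosed N -> Zirreducible N ->
    (forall x, N x -> G x) ->
    (forall g x, G g -> N x -> N (invmx g *m x *m g)) ->
    (forall x, N x -> unipotent x) ->
    forall x, N x -> x = 1%:M.

(* A rational representation of G on V = K^m (column vectors): a group
   homomorphism G -> GL_m whose entries are regular functions on G,
   i.e. of the form P(g) / det(g)^k with P polynomial in the entries. *)
Definition is_rational_rep (n m : nat) (G : mxset n)
    (rho : 'M[K]_n -> 'M[K]_m) : Prop :=
  (forall g, G g -> rho g \in unitmx) /\
  (forall g h, G g -> G h -> rho (g *m h) = rho g *m rho h) /\
  exists (k : nat) (P : 'I_m -> 'I_m -> {mpoly K[n * n]}),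
    forall g, G g -> forall i j, rho g i j = mxeval (P i j) g / (\det g) ^+ k.

Definition veval (m : nat) (f : {mpoly K[m]}) (v : 'cV[K]_m) : K :=
  f.@[fun i => v i 0].

Definition is_invariant (n m : nat) (R : mxset n) (rho : 'M[K]_n -> 'M[K]_m)
    (f : {mpoly K[m]}) : Prop :=
  forall g, R g -> forall v : 'cV[K]_m, veval f (rho g *m v) = veval f v.

Definition inv_zero_set (n m : nat) (R : mxset n) (rho : 'M[K]_n -> 'M[K]_m)
    (hi : option nat) (v : 'cV[K]_m) : Prop :=
  forall (d : nat) (f : {mpoly K[m]}),
    (1 <= d)%N -> (if hi is Some D then (d <= D)%N else true) ->
    f \is d.-homog -> is_invariant R rho f -> veval f v = 0.

Definition null_cone (n m : nat) (R : mxset n) (rho : 'M[K]_n -> 'M[K]_m)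
  : 'cV[K]_m -> Prop := inv_zero_set R rho None.

Definition cuts_null_cone (n m : nat) (R : mxset n) (rho : 'M[K]_n -> 'M[K]_m)
    (D : nat) : Prop :=
  forall v, inv_zero_set R rho (Some D) v <-> null_cone R rho v.

Definition is_sigma (n m : nat) (R : mxset n) (rho : 'M[K]_n -> 'M[K]_m)
    (D : nat) : Prop :=
  cuts_null_cone R rho D /\
  forall D', cuts_null_cone R rho D' -> (D <= D')%N.

End LinAlgGroups.

(* Main.v *)
Require Import Defs.
From HB Require Import structures.
From mathcomp Require Import all_boot all_order all_algebra.
From mathcomp Require Import mpoly.
From Stdlib Require Import Classical ClassicalEpsilon.
Set Implicit Arguments. Unset Strict Implicit. Unset Printing Implicit Defensive.
Import Order.TTheory GRing.Theory Num.Theory.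
Local Open Scope ring_scope.

Lemma fchoice1 (A C : Type) (P : A -> C -> Prop) :
  (forall a, exists c, P a c) -> exists F : A -> C, forall a, P a (F a).
Proof.
move=> H.
exists (fun a => proj1_sig (constructive_indefinite_description _ (H a))).
by move=> a; case: (constructive_indefinite_description _ _).
Qed.

Lemma fchoice2 (A B C : Type) (P : A -> B -> C -> Prop) :
  (forall a b, exists c, P a b c) -> exists F : A -> B -> C, forall a b, P a b (F a b).
Proof.
move=> H.
exists (fun a b => proj1_sig (constructive_indefinite_description _ (H a b))).
by move=> a b; case: (constructive_indefinite_description _ _).
Qed.

Lemma dickson_gen N (k : nat) (S : {set 'I_N}) (M : 'X_{1..N} -> Prop) :
  (#|S| <= k)%N ->
  (forall m m', M m -> M m' -> forall i, i \notin S -> m i = m' i) ->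
  exists F : seq 'X_{1..N}, (forall f, f \in F -> M f) /\
    forall m, M m -> exists2 f, f \in F & (f <= m)%MM.
Proof.
elim: k S M => [|k IH] S M hS hM.
  have S0 : S = set0 by apply/eqP; rewrite -cards_eq0 -leqn0.
  case: (classic (exists a, M a)) => [[a Ma]|nM]; last first.
    by exists [::]; split=> // m Mm; case: nM; exists m.
  exists [:: a]; split; first by move=> f; rewrite inE => /eqP ->.
  move=> m Mm; exists a; rewrite ?inE //.
  have -> : a = m by apply/mnmP => i; apply: hM => //; rewrite S0 inE.
  exact: lepm_refl.
case: (classic (exists a, M a)) => [[a Ma]|nM]; last first.
  by exists [::]; split=> // m Mm; case: nM; exists m.
have H : forall (i : 'I_N) (c : nat), exists F : seq 'X_{1..N},
    (i \in S) -> (c < a i)%N ->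
    (forall f, f \in F -> M f /\ f i = c) /\
    forall m, M m -> m i = c -> exists2 f, f \in F & (f <= m)%MM.
  move=> i c; case: (classic (i \in S)) => iS; last by exists [::].
  have := IH (S :\ i) (fun m => M m /\ m i = c).
  case.
  - by move: hS; rewrite (cardsD1 i S) iS add1n ltnS.
  - move=> m m' [Mm mi] [Mm' mi'] j; rewrite in_setD1 negb_and negbK.
    case/orP => [/eqP -> | jS]; first by rewrite mi mi'.
    exact: hM.
  move=> F [FM Fc]; exists F => _ _; split=> // m Mm mi; exact: Fc.
have [Fs HF] := fchoice2 H.
exists (a :: flatten [seq flatten [seq Fs i c | c <- iota 0 (a i)] | i <- enum S]).
split.
  move=> f; rewrite inE => /orP [/eqP -> //|].
  case/flattenP => s /mapP [i]; rewrite mem_enum => iS -> /flattenP [s' /mapP [c]].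
  rewrite mem_iota add0n => /andP [_ ca] -> fF.
  by case: (HF i c iS ca) => /(_ f fF) [].
move=> m Mm.
case: (boolP (a <= m)%MM) => am; first by exists a; rewrite ?inE ?eqxx.
have [i mi] : exists i, (m i < a i)%N.
  apply: NNPP => nE; move: am; apply/negP/negPn/mnm_lepP => i.
  by rewrite leqNgt; apply/negP => h; apply: nE; exists i.
have iS : i \in S.
  apply: contraLR mi => iS; rewrite -leqNgt (hM a m Ma Mm i iS) //.
case: (HF i (m i) iS mi) => _ /(_ m Mm erefl) [f fF fm].
exists f => //; rewrite inE; apply/orP; right.
apply/flattenP; exists (flatten [seq Fs i c | c <- iota 0 (a i)]).
  by apply/mapP; exists i; rewrite ?mem_enum.
apply/flattenP; exists (Fs i (m i)) => //.
by apply/mapP; exists (m i); rewrite // mem_iota add0n.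
Qed.

Lemma dickson N (M : 'X_{1..N} -> Prop) :
  exists F : seq 'X_{1..N}, (forall f, f \in F -> M f) /\
    forall m, M m -> exists2 f, f \in F & (f <= m)%MM.
Proof.
apply: (@dickson_gen N #|[set: 'I_N]| [set: 'I_N]) => // m m' _ _ i.
by rewrite inE.
Qed.

Section Hilbert.
Variable K : fieldType.
Variable N : nat.

Lemma reduce_step (p g : {mpoly K[N]}) :
  p != 0 -> g != 0 -> (mlead g <= mlead p)%MM ->
  let q := p - (mleadc p / mleadc g) *: (g * 'X_[mlead p - mlead g]) in
  q = 0 \/ (mlead q < mlead p)%O.
Proof.
move=> p0 g0 le q.
set m := mlead p; set f := mlead g.
set c := mleadc p / mleadc g.
have gc : mleadc g != 0 by rewrite mleadc_eq0.
have pc : mleadc p != 0 by rewrite mleadc_eq0.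
have Em : (m - f + f = m)%MM by rewrite submK.
have tm : (c *: (g * 'X_[m - f]))@_m = mleadc p.
  rewrite mcoeffZ; have := mcoeffMX g (m - f) f; rewrite Em => ->.
  by rewrite /c -mulrA mulVf // mulr1.
have qm : q@_m = 0 by rewrite /q mcoeffB tm subrr.
have tle : (mlead (c *: (g * 'X_[m - f])) <= m)%O.
  apply: le_trans (mleadZ_le _ _) _.
  apply: le_trans (mleadM_le _ _) _.
  by rewrite mleadXm addmC Em.
have qle : (mlead q <= m)%O.
  apply: le_trans (mleadB_le _ _) _.
  by rewrite leUx lexx tle.
case: (eqVneq q 0) => [->|q0]; first by left.
right; rewrite lt_neqAle qle andbT.
apply/eqP => E; move: (mleadc_eq0 q); rewrite E qm eqxx => /esym.
by rewrite (negbTE q0).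
Qed.

Lemma hilbert (I : {mpoly K[N]} -> Prop) :
  (forall p q, I p -> I q -> I (p - q)) ->
  (forall p q, I q -> I (p * q)) ->
  exists gs : seq {mpoly K[N]}, (forall g, g \in gs -> I g) /\
    forall v : 'I_N -> K, (forall g, g \in gs -> g.@[v] = 0) ->
      forall p, I p -> p.@[v] = 0.
Proof.
move=> IB IM.
pose M m := exists p, [/\ I p, p != 0 & mlead p = m].
have [F [FM Fc]] := dickson M.
have HW0 : forall m, exists p : {mpoly K[N]}, M m -> [/\ I p, p != 0 & mlead p = m].
  move=> m; case: (classic (M m)) => [[p Hp]|nM]; first by exists p.
  by exists 0.
have [W HW] := fchoice1 HW0.
exists (map W F); split.
  by move=> g /mapP [f fF ->]; case: (HW f (FM f fF)).
move=> v gv.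
suff H : forall m p, I p -> mlead p = m -> p.@[v] = 0.
  by move=> p Ip; exact: (H _ p Ip erefl).
move=> m; elim/(well_founded_induction (@ltom_wf N)): m => m IH p Ip Em.
case: (eqVneq p 0) => [->|p0]; first by rewrite meval0.
have [f fF fm] := Fc m (ex_intro _ p (And3 Ip p0 Em)).
have [Ig g0 Eg] := HW f (FM f fF).
have le : (mlead (W f) <= mlead p)%MM by rewrite Eg Em.
have := reduce_step p0 g0 le.
set q := p - _ => Hq.
have Iq : I q.
  apply: IB => //; rewrite -mul_mpolyC (mulrC (W f)) mulrA; exact: IM.
have qv : q.@[v] = 0.
  case: Hq => [->|lt]; first by rewrite meval0.
  by apply: (IH (mlead q)) => //; rewrite -Em.
clear IH.
have : p = q + (mleadc p / mleadc (W f)) *: (W f * 'X_[mlead p - mlead (W f)]).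
  by rewrite /q subrK.
move=> ->; rewrite mevalD qv add0r mevalZ mevalM.
by rewrite (gv (W f)) ?mul0r ?mulr0 //; apply/map_f.
Qed.

End Hilbert.

Section Noeth.
Variable K : closedFieldType.
Variable n : nat.

Lemma no_chain (A : nat -> mxset K n) :
  (forall k, Zclosed (A k)) -> (forall k x, A k.+1 x -> A k x) ->
  ~ (forall k, exists x, A k x /\ ~ A k.+1 x).
Proof.
move=> Acl Adec Hstr.
have mono : forall k k' x, (k <= k')%N -> A k' x -> A k x.
  move=> k k' x /subnK <-; elim: (k' - k)%N => [//|j IHj] H.
  by apply: IHj; apply: Adec; rewrite -addSn.
pose I (f : {mpoly K[n * n]}) := exists k, forall g, A k g -> mxeval f g = 0.
have [gs [gsI gsV]] : exists gs : seq {mpoly K[n * n]}, (forall g, g \in gs -> I g) /\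
    forall v : 'I_(n * n) -> K, (forall g, g \in gs -> g.@[v] = 0) ->
      forall p, I p -> p.@[v] = 0.
  apply: hilbert.
  - move=> p q [k1 H1] [k2 H2]; exists (maxn k1 k2) => g Ag.
    rewrite /mxeval mevalB -/(mxeval p g) -/(mxeval q g).
    rewrite H1 ?H2 ?subrr //; apply: mono Ag; by rewrite ?leq_maxl ?leq_maxr.
  - move=> p q [k H]; exists k => g Ag.
    by rewrite /mxeval mevalM -/(mxeval q g) H // mulr0.
have [k0 Hk0] : exists k0, forall g, g \in gs -> forall x, A k0 x -> mxeval g x = 0.
  elim: gs gsI {gsV} => [|g gs IHgs] gsI; first by exists 0%N.
  have [k1 H1] := gsI g (mem_head _ _).
  have [k2 H2] : exists k2, forall g, g \in gs -> forall x, A k2 x -> mxeval g x = 0.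
    by apply: IHgs => h hgs; apply: gsI; rewrite inE hgs orbT.
  exists (maxn k1 k2) => h; rewrite inE => /orP [/eqP -> | hgs] x Ax.
    by apply: H1; apply: mono Ax; rewrite leq_maxl.
  by apply: H2 => //; apply: mono Ax; rewrite leq_maxr.
have [x [Ax nAx]] := Hstr k0; apply: nAx.
have [S HS] := Acl k0.+1.
have [S0 HS0] := Acl k0.
apply/HS; split; first by case: (HS0 x).1.
move=> f Sf; rewrite /mxeval; apply: gsV.
  by move=> g gg; apply: Hk0.
exists k0.+1 => g Ag; by case: (HS g).1 => // _; apply.
Qed.

Definition good (A : mxset K n) := exists (k : nat) (Z : nat -> mxset K n),
  (forall i, (i < k)%N -> Zirreducible (Z i) /\ forall x, Z i x -> A x) /\
  forall x, A x -> exists2 i, (i < k)%N & Z i x.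

Lemma Zclosed_inter (A B : mxset K n) : Zclosed A -> Zclosed B ->
  Zclosed (fun x => A x /\ B x).
Proof.
move=> [SA HA] [SB HB]; exists (fun f => SA f \/ SB f) => g; split.
  case=> /HA [Gg HAg] /HB [_ HBg]; split => // f [] ?; [exact: HAg | exact: HBg].
case=> Gg Hg; split; [apply/HA | apply/HB]; split => // f Sf; apply: Hg; tauto.
Qed.

Lemma good_step (A : mxset K n) : Zclosed A -> ~ good A ->
  exists B : mxset K n, [/\ Zclosed B, ~ good B, (forall x, B x -> A x) &
     exists x, A x /\ ~ B x].
Proof.
move=> Acl nG.
case: (classic (exists x, A x)) => [Ane|Ae]; last first.
  case: nG; exists 0%N, (fun _ => A); split=> // x Ax; case: Ae; by exists x.
have AGL : forall g, A g -> GLn g by case: Acl => S HS g /HS [].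
case: (classic (Zirreducible A)) => [Air|nir].
  case: nG; exists 1%N, (fun _ => A); split => // x Ax; by exists 0%N.
have [Z1 [Z2 [Z1c Z2c cov n1 n2]]] : exists Z1 Z2 : mxset K n,
  [/\ Zclosed Z1, Zclosed Z2, (forall g, A g -> Z1 g \/ Z2 g),
      ~ (forall g, A g -> Z1 g) & ~ (forall g, A g -> Z2 g)].
  apply: NNPP => H; apply: nir; split => //; split => // Z1 Z2 c1 c2 cov.
  apply: NNPP => H2; apply: H; exists Z1, Z2; split => //; tauto.
have [x1 [A1 nx1]] : exists x, A x /\ ~ Z1 x.
  apply: NNPP => H; apply: n1 => g Ag; apply: NNPP => nZ; apply: H; by exists g.
have [x2 [A2 nx2]] : exists x, A x /\ ~ Z2 x.
  apply: NNPP => H; apply: n2 => g Ag; apply: NNPP => nZ; apply: H; by exists g.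
case: (classic (good (fun x => A x /\ Z1 x))) => G1; last first.
  exists (fun x => A x /\ Z1 x); split => //; first exact: Zclosed_inter.
    by move=> x [].
  by exists x1; split => // -[].
case: (classic (good (fun x => A x /\ Z2 x))) => G2; last first.
  exists (fun x => A x /\ Z2 x); split => //; first exact: Zclosed_inter.
    by move=> x [].
  by exists x2; split => // -[].
case: nG; case: G1 => k1 [W1 [H1 C1]]; case: G2 => k2 [W2 [H2 C2]].
exists (k1 + k2)%N, (fun i => if (i < k1)%N then W1 i else W2 (i - k1)%N).
split.
  move=> i ik; case: ifP => ik1.
    by case: (H1 i ik1) => ? H; split=> // x /H [].
  have : (i - k1 < k2)%N by rewrite ltn_subLR // leqNgt ik1.
  by move=> /H2 [? H]; split=> // x /H [].
move=> x Ax; case: (cov x Ax) => Zx.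
  case: (C1 x (conj Ax Zx)) => i ik Wx; exists i; rewrite ?ik //.
  exact: ltn_addr.
case: (C2 x (conj Ax Zx)) => i ik Wx; exists (k1 + i)%N.
  by rewrite ltn_add2l.
by rewrite ltnNge leq_addr /= addKn.
Qed.

Lemma closed_good (A : mxset K n) : Zclosed A -> good A.
Proof.
move=> Acl; apply: NNPP => nG.
pose T := {B : mxset K n | Zclosed B /\ ~ good B}.
have st : forall t : T, exists t' : T, (forall x, sval t' x -> sval t x) /\
    exists x, sval t x /\ ~ sval t' x.
  move=> [B [Bc nB]] /=; have [B' [B'c nB' sub str]] := good_step Bc nB.
  by exists (exist _ B' (conj B'c nB')).
have [F HF] := fchoice1 st.
pose ch := fix ch k : T := if k is k'.+1 then F (ch k') else exist _ A (conj Acl nG).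
apply: (@no_chain (fun k => sval (ch k))).
- by move=> k; case: (ch k) => B [].
- by move=> k x /=; case: (HF (ch k)) => H _; apply: H.
- by move=> k /=; case: (HF (ch k)).
Qed.

End Noeth.

Section Trans.
Variable K : closedFieldType.
Variable n : nat.

Definition genmx : 'M[{mpoly K[n * n]}]_n := \matrix_(i, j) 'X_(mxvec_index i j).

Definition trtuple (a : 'M[K]_n) : (n * n).-tuple {mpoly K[n * n]} :=
  [tuple mxvec (genmx *m map_mx (fun c => c%:MP) a) 0 k | k < n * n].

Lemma mxeval_tr (a : 'M[K]_n) f z :
  mxeval (f \mPo trtuple a) z = mxeval f (z *m a).
Proof.
rewrite /mxeval comp_mpoly_meval; apply: meval_eq => k.
rewrite tnth_mktuple.
set v := (fun i => mxvec z 0 i).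
have -> : (mxvec (genmx *m map_mx (fun c => c%:MP) a) 0 k).@[v] =
   mxvec (map_mx (meval v) (genmx *m map_mx (fun c => c%:MP) a)) 0 k.
  by rewrite -map_mxvec mxE.
rewrite map_mxM; congr (mxvec (_ *m _) 0 k); apply/matrixP => i j; rewrite !mxE.
  transitivity (v (mxvec_index i j)); first exact: mevalXU.
  exact: mxvecE.
exact: mevalC.
Qed.

Lemma Zclosed_tr (a : 'M[K]_n) (Z : mxset K n) : a \in unitmx -> Zclosed Z ->
  Zclosed (fun z => Z (z *m a)).
Proof.
move=> au [S HS].
exists (fun f' => exists2 f, S f & f' = f \mPo trtuple a) => z; split.
  move=> /HS [Gz Hz]; split.
    by move: Gz; rewrite /GLn unitmx_mul => /andP [].
  by move=> f' [f Sf ->]; rewrite mxeval_tr; apply: Hz.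
move=> [Gz Hz]; apply/HS; split.
  by rewrite /GLn unitmx_mul Gz.
by move=> f Sf; rewrite -mxeval_tr; apply: Hz; exists f.
Qed.

Lemma Zirr_tr (h : 'M[K]_n) (Z : mxset K n) : h \in unitmx -> Zirreducible Z ->
  Zirreducible (fun y => Z (y *m h)).
Proof.
move=> hu [[z Zz] [ZG Zsplit]]; split.
  by exists (z *m invmx h); rewrite mulmxKV.
split.
  by move=> y /ZG; rewrite /GLn unitmx_mul => /andP [].
move=> Z1 Z2 c1 c2 cov.
have hiu : invmx h \in unitmx by rewrite unitmx_inv.
have := Zsplit (fun z => Z1 (z *m invmx h)) (fun z => Z2 (z *m invmx h))
   (Zclosed_tr hiu c1) (Zclosed_tr hiu c2).
case.
- by move=> g Zg; apply: cov; rewrite mulmxKV.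
- by move=> H; left => y /H; rewrite mulmxK.
- by move=> H; right => y /H; rewrite mulmxK.
Qed.

End Trans.

Notation hom d := (@ishomog1 _ _ d mdeg).

Section Vec.
Variable K : closedFieldType.
Variable m : nat.

Definition vtuple (M : 'M[K]_m) : m.-tuple {mpoly K[m]} :=
  [tuple \sum_j M i j *: 'X_j | i < m].

Lemma veval_tr (M : 'M[K]_m) f w :
  veval (f \mPo vtuple M) w = veval f (M *m w).
Proof.
rewrite /veval comp_mpoly_meval; apply: meval_eq => i.
rewrite tnth_mktuple mxE raddf_sum /=; apply: eq_bigr => j _.
by rewrite mevalZ mevalXU.
Qed.

Lemma homog_prod_gen (I : Type) (r : seq I) (F : I -> {mpoly K[m]}) (dg : I -> nat) :
  (forall i, F i \is hom (dg i)) ->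
  \prod_(i <- r) F i \is hom (\sum_(i <- r) dg i)%N.
Proof.
move=> H; elim: r => [|x r IH]; first by rewrite !big_nil dhomog1.
by rewrite !big_cons; apply: dhomogM.
Qed.

Lemma homog_comp k (p : {mpoly K[k]}) (t : k.-tuple {mpoly K[m]}) e d :
  p \is e.-homog -> (forall j, tnth t j \is d.-homog) ->
  p \mPo t \is hom (e * d)%N.
Proof.
move=> hp ht; rewrite comp_mpolyEX big_seq; apply: rpred_sum => mm mmS.
apply: dhomogZ; rewrite comp_mpolyX.
have -> : (e * d = \sum_(i < k) d * mm i)%N.
  by rewrite -big_distrr /= -mdegE (dhomog_mf hp mmS) mulnC.
apply: homog_prod_gen => i; exact: dhomogMn.
Qed.

Lemma vtuple_homog (M : 'M[K]_m) j : tnth (vtuple M) j \is 1.-homog.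
Proof.
rewrite tnth_mktuple; apply: rpred_sum => i _; apply: dhomogZ.
by rewrite dhomogX; apply/eqP; exact: mdeg1.
Qed.

End Vec.


Lemma dedup (T : eqType) (x0 : T) (E : T -> T -> Prop) (Er : forall x, E x x) (Es : forall x y, E x y -> E y x)
  (L : seq T) : exists L' : seq T, [/\ (forall x, x \in L' -> x \in L),
   (forall x, x \in L -> exists2 y, y \in L' & E x y) &
   (forall i j, (i < size L')%N -> (j < size L')%N -> E (nth x0 L' i) (nth x0 L' j) -> i = j)].
Proof.
elim: L => [|x L [L0 [H1 H2 H3]]]; first by exists [::]; split.
case: (classic (exists2 y, y \in L0 & E x y)) => [Hx|nx].
  exists L0; split.
  - by move=> y /H1; rewrite inE orbC => ->.
  - by move=> y; rewrite inE => /orP [/eqP -> //|/H2].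
  - exact: H3.
exists (x :: L0); split.
- by move=> y; rewrite !inE => /orP [->//|/H1 ->]; rewrite orbT.
- move=> y; rewrite inE => /orP [/eqP ->|/H2 [z zL Ez]].
    by exists x; rewrite ?mem_head.
  by exists z; rewrite // inE zL orbT.
- case=> [|i] [|j] //= iL jL Eij.
  + by case: nx; exists (nth x0 L0 j); rewrite ?mem_nth.
  + by case: nx; exists (nth x0 L0 i); rewrite ?mem_nth //; apply: Es.
  + by congr S; apply: H3.
Qed.

Section Key.
Variables (K : closedFieldType) (n m : nat) (G : mxset K n) (rho : 'M[K]_n -> 'M[K]_m).
Hypothesis Gsub : is_subgroup G.
Hypothesis Gcl : Zclosed G.
Hypothesis rhoU : forall g, G g -> rho g \in unitmx.
Hypothesis rhoM : forall g h, G g -> G h -> rho (g *m h) = rho g *m rho h.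

Lemma rho1 : rho 1%:M = 1%:M.
Proof.
case: Gsub => _ [G1 _].
have := rhoM G1 G1; rewrite mul1mx => E.
have u := rhoU G1.
transitivity (rho 1%:M *m rho 1%:M *m invmx (rho 1%:M)); first by rewrite mulmxK.
by rewrite -E mulmxV.
Qed.

Lemma key v : null_cone G rho v -> null_cone (identity_component G) rho v.
Proof.
move=> Nv d f d1 _ fh finv.
case: Gsub => [GGL [G1 [GM GV]]].
have [k [Z [HZ cov]]] := closed_good Gcl.
have [h Hh] : exists h : nat -> 'M[K]_n, forall i, (i < k)%N -> Z i (h i).
  apply: (fchoice1 (P := fun i x => (i < k)%N -> Z i x)) => i; case: (classic (i < k)%N) => ik; last by exists 1%:M.
  by case: (HZ i ik) => [[[x Zx] _] _]; exists x.
have hG : forall i, (i < k)%N -> G (h i) by move=> i ik; case: (HZ i ik) => _; apply; apply: Hh.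
have C1 : forall g, G g -> exists2 i, (i < k)%N &
    forall w, veval f (rho g *m w) = veval f (rho (h i) *m w).
  move=> g Gg; case: (cov g Gg) => i ik Zg; exists i => // w.
  have hu : h i \in unitmx := GGL _ (hG i ik).
  set y := g *m invmx (h i).
  have Gy : identity_component G y.
    exists (fun x => Z i (x *m h i)); split.
      move=> x Zx; rewrite -(mulmxK hu x); apply: GM; last exact: GV (hG i ik).
      by case: (HZ i ik) => _; apply.
    split; first by apply: Zirr_tr => //; case: (HZ i ik).
    by rewrite mul1mx /y mulmxKV //; split => //; apply: Hh.
  have Gy' : G y by case: Gy => Y [YG [_ [_ Yy]]]; exact: YG.
  have Eg : rho g = rho y *m rho (h i).
    by rewrite -rhoM; [rewrite /y mulmxKV | | apply: hG].
  by rewrite Eg -mulmxA finv.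
pose p i := f \mPo vtuple (rho (h i)).
have pE : forall i w, veval (p i) w = veval f (rho (h i) *m w) by move=> i w; exact: veval_tr.
pose L := [seq p i | i <- iota 0 k].
pose E := fun p q : {mpoly K[m]} => forall w, veval p w = veval q w.
have [L' [L'L LL' L'd]] := @dedup _ 0 E (fun _ _ => erefl) (fun _ _ H w => esym (H w)) L.
pose kk := size L'.
pose t := in_tuple L'.
have tL : forall j : 'I_kk, exists2 i, (i < k)%N & tnth t j = p i.
  move=> j; have := L'L _ (mem_tnth j t); case/mapP => i.
  by rewrite mem_iota add0n => /andP [_ ik] ->; exists i.
have th : forall j : 'I_kk, tnth t j \is d.-homog.
  move=> j; have [i _ ->] := tL j; rewrite -[d]muln1; apply: homog_comp => //.
  exact: vtuple_homog.
have tdist : forall j1 j2 : 'I_kk, E (tnth t j1) (tnth t j2) -> j1 = j2.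
  move=> j1 j2; rewrite !(tnth_nth 0) /= => H; apply: val_inj; exact: (L'd _ _ (ltn_ord j1) (ltn_ord j2) H).
have toL' : forall i, (i < k)%N -> exists j : 'I_kk, E (p i) (tnth t j).
  move=> i ik; have [y yL Ey] : exists2 y, y \in L' & E (p i) y.
    by apply: LL'; apply/mapP; exists i; rewrite // mem_iota add0n.
  have yt : y \in t by [].
  by case/tnthP: yt => j Ej; exists j; rewrite -Ej.
have fin : forall g, G g -> forall j : 'I_kk, exists j' : 'I_kk,
    forall w, veval (tnth t j) (rho g *m w) = veval (tnth t j') w.
  move=> g Gg j; have [i ik ->] := tL j.
  have [i' ik' Hi'] := C1 _ (GM _ _ (hG i ik) Gg).
  have [j' Ej'] := toL' i' ik'; exists j' => w.
  rewrite pE mulmxA -rhoM; [|exact: hG|exact: Gg].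
  by rewrite Hi' -pE Ej'.
pose cs w : kk.-tuple K := [tuple veval (tnth t j) w | j < kk].
pose P w := \prod_(c <- cs w) ('X - c%:P).
have Pinv : forall g w, G g -> P (rho g *m w) = P w.
  move=> g w Gg; have [s Hs] := fchoice1 (fin g Gg).
  have sinj : injective s.
    move=> j1 j2 Hj; apply: tdist => w'.
    have Ew : rho g *m (rho (invmx g) *m w') = w'.
      rewrite mulmxA -rhoM; [|exact: Gg|exact: GV].
      by rewrite mulmxV ?rho1 ?mul1mx //; apply: GGL.
    by rewrite -Ew !Hs Hj.
  rewrite /P !big_tuple [RHS](reindex_inj sinj) /=; apply: eq_bigr => j _.
  by rewrite !tnth_mktuple Hs.
pose e (i : nat) := (@mesym kk K i) \mPo t.
have eE : forall i w, veval (e i) w = (@mesym kk K i).@[tnth (cs w)].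
  move=> i w; rewrite /veval comp_mpoly_meval; apply: meval_eq => j.
  by rewrite tnth_mktuple.
have coefP : forall w (i : 'I_kk.+1), (P w)`_(kk - i) = (-1) ^+ i * veval (e i) w.
  by move=> w i; rewrite eE /P mroots_coeff.
have einv : forall i : 'I_kk.+1, is_invariant G rho (e i).
  move=> i g Gg w; have := coefP (rho g *m w) i; rewrite Pinv // coefP.
  by move/(congr1 ( *%R ((-1) ^+ i))); rewrite !signrMK.
have e0 : forall i : 'I_kk.+1, (0 < i)%N -> veval (e i) v = 0.
  move=> i i0; apply: (Nv (i * d)%N) => //.
    by rewrite muln_gt0 i0.
  apply: homog_comp => //; exact: dhomog_mesym.
have PX : P v = 'X^kk.
  apply/polyP => j; rewrite coefXn.
  case: (ltngtP j kk) => jk.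
  - have ik : (kk - j < kk.+1)%N by rewrite ltnS leq_subr.
    have := coefP v (Ordinal ik); rewrite /= subKn ?(ltnW jk) // => ->.
    by rewrite (e0 (Ordinal ik)) ?mulr0 //= subn_gt0.
  - rewrite nth_default // size_prod_XsubC size_tuple; exact: jk.
  - rewrite jk; have := monic_prod_XsubC (cs v) predT id.
    move/monicP; rewrite lead_coefE size_prod_XsubC size_tuple /=.
    by rewrite /P; move=> ->.
have [i ik Hf] := C1 _ G1.
have [j Ej] := toL' i ik.
have fv : veval f v = tnth (cs v) j.
  by rewrite tnth_mktuple -Ej pE -Hf rho1 mul1mx.
have : root (P v) (veval f v) by rewrite root_prod_XsubC fv mem_tnth.
rewrite PX /root hornerXn expf_eq0 => /andP [_ /eqP //].
Qed.

End Key.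

Theorem proposition7p6 (K : closedFieldType) (n m : nat) (G : mxset K n)
    (rho : 'M[K]_n -> 'M[K]_m) :
  is_reductive G -> is_rational_rep G rho ->
  forall sG sG0 : nat,
    is_sigma G rho sG -> is_sigma (identity_component G) rho sG0 ->
    (sG0 <= sG)%N.
Proof.
move=> [[Gsub Gcl] _] [rhoU [rhoM _]] sG sG0 [cutG _] [_ minG0].
apply: minG0 => v; split.
- move=> Hv; apply: (key Gsub Gcl rhoU rhoM); apply/cutG.
  move=> d f d1 dD fh finv; apply: (Hv d f d1 dD fh).
  move=> g [Z [ZG [_ [_ Zg]]]] w; exact: finv (ZG g Zg) w.
- move=> Hv d f d1 _ fh finv; exact: (Hv d f d1 erefl fh finv).
Qed.
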